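(* Let $q$ be a prime power, $m\ge1$, $j\ge1$, let $G\in GF(q^m)[x]$ be a separable polynomial of degree $\tau$ with factorization $G(x)=\prod_{i=1}^{\tau}(x-\beta_i)$, the $\beta_i$ lying in some finite extension field of $GF(q^m)$, and let $L=\{\alpha_1,\dots,\alpha_n\}\subseteq GF(q^m)$ with $G(\alpha_k)\ne 0$ for all $k$. Then the cumulative-separable code $\Gamma(L,G^j)$ equals the intersection (common subcode) of the cumulative codes $\Gamma(L,(x-\beta_i)^j)$, $i=1,\dots,\tau$.
   Context: For a set $L=\{\alpha_1,\dots,\alpha_n\}$ of distinct elements of a finite field $F\supseteq GF(q)$ and a polynomial $P\in F[x]$ with $P(\alpha_k)\neq0$ for all $k$, the $q$-ary Goppa code is $\Gamma(L,P)=\{c\in GF(q)^n:\ \sum_k \frac{c_k}{x-\alpha_k}\equiv 0 \pmod{P(x)}\}$. A Goppa code $\Gamma(L,G^j)$ with $G$ separable is called cumulative-separable; a Goppa code with Goppa polynomial $(x-\beta)^j$ is called cumulative. *)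

(* Defs.v *)
From HB Require Import structures.
From mathcomp Require Import all_boot all_order all_algebra all_field.
Set Implicit Arguments. Unset Strict Implicit. Unset Printing Implicit Defensive.
Import GRing.Theory.
Local Open Scope ring_scope.

(* Inverse of (x - a) modulo P, for P.[a] != 0:
   (x - a) * inv_mod_lin P a = 1 - P * (-P.[a]^-1)  (i.e. == 1 mod P). *)
Definition inv_mod_lin (F : fieldType) (P : {poly F}) (a : F) : {poly F} :=
  - (P.[a])^-1 *: ((P - (P.[a])%:P) %/ ('X - a%:P)).

(* The q-ary Goppa code Gamma(L, P): the subfield GF(q) is given by the
   field Fq together with its embedding f into the field F containing
   L = {alpha_0, ..., alpha_{n-1}} and the coefficients of P.
   c is in the code iff  sum_k c_k / (x - alpha_k) == 0  (mod P). *)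
Definition goppa_code (Fq : finFieldType) (F : fieldType) (f : Fq -> F)
    (n : nat) (alpha : 'I_n -> F) (P : {poly F}) : {set 'rV[Fq]_n} :=
  [set c : 'rV[Fq]_n |
     P %| \sum_(k < n) (f (c 0 k)) *: inv_mod_lin P (alpha k)].

(* Main.v *)
Require Import Defs.
From HB Require Import structures.
From mathcomp Require Import all_boot all_order all_algebra all_field.
Import GRing.Theory.
Local Open Scope ring_scope.

Lemma inv_spec (F : fieldType) (P : {poly F}) a : P.[a] != 0 ->
  ('X - a%:P) * inv_mod_lin P a = 1 - P.[a]^-1 *: P.
Proof.
move=> Pa; rewrite /inv_mod_lin -scalerAr mulrC divpK.
  rewrite scalerBr !scaleNr opprK -!mul_polyC -polyCM mulVf //.
  by rewrite addrC mul_polyC.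
by rewrite -root_factor_theorem /root !hornerE subrr.
Qed.

Lemma inv_unique (F : fieldType) (D w : {poly F}) a : D.[a] != 0 ->
  D %| ('X - a%:P) * w - 1 -> D %| w - inv_mod_lin D a.
Proof.
move=> Da H.
have cop : coprimep D ('X - a%:P) by rewrite coprimep_XsubC.
rewrite -(Gauss_dvdpr _ cop) mulrBr inv_spec // opprB addrCA.
by apply: dvdp_add => //; rewrite dvdpZr ?invr_eq0 // dvdpp.
Qed.

Lemma prod_dvd (R : idomainType) (I : eqType) (r : seq I) (Q : I -> {poly R}) p :
  uniq r -> (forall i k, i != k -> coprimep (Q i) (Q k)) ->
  (\prod_(i <- r) Q i %| p) = all (fun i => Q i %| p) r.
Proof.
move=> + cop; elim: r => [|x r IH] /=; first by rewrite big_nil dvd1p.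
case/andP=> xr ur; rewrite big_cons Gauss_dvdp ?IH //.
elim: r xr {IH ur} => [|y r IH2] /=; first by rewrite big_nil coprimep1.
rewrite inE negb_or => /andP[xy xr].
by rewrite big_cons coprimepMr cop // IH2.
Qed.

Theorem corollary2
  (Fq : finFieldType) (m : nat) (K : finFieldType)
  (iK : {rmorphism Fq -> K})
  (E : finFieldType) (iE : {rmorphism K -> E})
  (hm : (1 <= m)%N) (hK : #|K| = (#|Fq| ^ m)%N)
  (j : nat) (hj : (1 <= j)%N)
  (G : {poly K}) (tau : nat) (beta : 'I_tau -> E)
  (hsep : separable.separable_poly G)
  (hfact : map_poly iE G = \prod_(i < tau) ('X - (beta i)%:P))
  (n : nat) (alpha : 'I_n -> K)
  (halpha : injective alpha)
  (hGa : forall k, G.[alpha k] != 0) :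
  goppa_code iK alpha (G ^+ j) =
  \bigcap_(i < tau)
     goppa_code (fun x => iE (iK x)) (fun k => iE (alpha k))
       (('X - (beta i)%:P) ^+ j).
Proof.
have hdiv i : ('X - (beta i)%:P) %| map_poly iE G.
  by rewrite hfact (bigD1 i) //= dvdp_mulr.
have hbeta i k : beta i != iE (alpha k).
  apply/negP => /eqP e.
  have := hdiv i; rewrite -root_factor_theorem /root e horner_map fmorph_eq0.
  by rewrite (negbTE (hGa k)).
have hPa i k : (('X - (beta i)%:P) ^+ j).[iE (alpha k)] != 0.
  by rewrite horner_exp hornerXsubC expf_neq0 // subr_eq0 eq_sym hbeta.
have hGja k : (G ^+ j).[alpha k] != 0 by rewrite horner_exp expf_neq0.
have hinj i k : i != k -> beta i != beta k.
  move=> ik; apply/negP => /eqP e.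
  have sepE : separable.separable_poly (map_poly iE G) by rewrite separable.separable_map.
  rewrite hfact in sepE.
  have : ('X - (beta i)%:P) * ('X - (beta i)%:P) %| \prod_(l < tau) ('X - (beta l)%:P).
    rewrite (bigD1 i) //= (bigD1 k) 1?eq_sym //= mulrA dvdp_mulr // e //.
  move/(separable.separable_coprime sepE).
  by rewrite coprimep_XsubC root_XsubC eqxx.
apply/setP => c; rewrite inE.
set S := \sum_(k < n) _.
have key i : ('X - (beta i)%:P) ^+ j %| map_poly iE S -
    \sum_(k < n) iE (iK (c 0 k)) *: inv_mod_lin (('X - (beta i)%:P) ^+ j) (iE (alpha k)).
  rewrite /S raddf_sum -sumrB; apply: (big_ind (fun x => ('X - (beta i)%:P) ^+ j %| x)) => //; first exact: dvdp_add.
  move=> k _; rewrite /= map_polyZ -scalerBr -mul_polyC dvdp_mull //.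
  apply: inv_unique; first exact: hPa.
  have -> : ('X - (iE (alpha k))%:P) * map_poly iE (inv_mod_lin (G ^+ j) (alpha k)) - 1
    = map_poly iE (('X - (alpha k)%:P) * inv_mod_lin (G ^+ j) (alpha k) - 1).
    by rewrite rmorphB rmorphM rmorph1 /= map_polyXsubC.
  rewrite inv_spec // addrAC subrr add0r -scaleNr. rewrite map_polyZ -mul_polyC dvdp_mull //.
  by rewrite rmorphXn dvdp_exp2r.
rewrite -(dvdp_map iE) rmorphXn /= hfact -prodrXl prod_dvd ?index_enum_uniq //; last first.
  move=> i k ik; apply: coprimep_expl; apply: coprimep_expr.
  by apply: coprimep_XsubC2; rewrite subr_eq0 eq_sym hinj.
apply/allP/bigcapP => H i _.
  rewrite inE; have := dvdp_sub (H i (mem_index_enum i)) (key i).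
  have E1 (a b : {poly E}) : a - (a - b) = b by rewrite opprB addrC subrK.
  by rewrite E1.
have := H i isT; rewrite inE => h.
by have := dvdp_add (key i) h; rewrite subrK.
Qed.
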